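(* Let $V$ be a finite-dimensional complex vector space and $M:\mathbb C\to GL(V)$ a rational function such that $[M(u),M(v)]=0$ for all $u,v\in\mathbb C$. Let $M(u)=M_S(u)M_U(u)$ be the multiplicative Jordan decomposition of $M(u)$ into commuting semisimple and unipotent parts. Then $M_S$ and $M_U$ are rational functions of $u$. *)

(* Defs.v *)
From HB Require Import structures.
From mathcomp Require Import all_boot all_order all_algebra.
From mathcomp Require Import reals complex.
Set Implicit Arguments. Unset Strict Implicit. Unset Printing Implicit Defensive.
Import Order.TTheory GRing.Theory Num.Theory.
Local Open Scope ring_scope.

(* The complex numbers are modelled as R[i] (= complex R) for a real
   field R : realType (every realType is a model of the reals). *)

Definition eval_pmx {C : comNzRingType} {m n : nat}
  (P : 'M[{poly C}]_(m, n)) (u : C) : 'M[C]_(m, n) :=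
  map_mx (fun p => p.[u]) P.

(* [M] is a rational matrix-valued function with common denominator [q]:
   q <> 0 and there is a polynomial matrix P with M u = P(u) / q(u)
   wherever q(u) <> 0 (the domain of definition of M). *)
Definition rational_mx_fun {C : fieldType} {n : nat}
  (q : {poly C}) (M : C -> 'M[C]_n) : Prop :=
  q != 0 /\
  exists P : 'M[{poly C}]_n,
    forall u, q.[u] != 0 -> M u = (q.[u])^-1 *: eval_pmx P u.

Definition unipotent_mx {C : fieldType} {n : nat} (U : 'M[C]_n) : Prop :=
  exists k : nat, iter k (mulmx (U - 1%:M)) 1%:M = 0.

(* Multiplicative Jordan decomposition A = S U of an invertible matrix:
   S semisimple (= diagonalizable over an algebraically closed field),
   U unipotent, and S, U commute. *)
Definition mult_jordan_decomp {C : fieldType} {n : nat}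
  (A S U : 'M[C]_n) : Prop :=
  [/\ A = S *m U, S *m U = U *m S, diagonalizable S & unipotent_mx U].

(* Main.v *)
Require Import Defs.
From HB Require Import structures.
From mathcomp Require Import all_boot all_order all_algebra.
From mathcomp Require Import reals complex ring.
Set Implicit Arguments. Unset Strict Implicit. Unset Printing Implicit Defensive.
Import Order.TTheory GRing.Theory Num.Theory.
Local Open Scope ring_scope.



Section RingLemmas.
Variable R : pzRingType.

Lemma nilp_add (x y : R) a b : GRing.comm x y -> x ^+ a = 0 -> y ^+ b = 0 ->
  (x + y) ^+ (a + b) = 0.
Proof.
move=> cxy xa yb; rewrite exprDn_comm //; apply: big1 => [[i /= hi]] _.
case: (leqP b i) => hb.
  by rewrite -(subnKC hb) exprD yb !(mul0r, mulr0, mul0rn).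
have : (a <= a + b - i)%N by rewrite -addnBA ?leq_addr // ltnW.
by move/subnKC <-; rewrite exprD xa !(mul0r, mulr0, mul0rn).
Qed.

Lemma nilp_mulr (x y : R) b : GRing.comm x y -> y ^+ b = 0 -> (x * y) ^+ b = 0.
Proof. by move=> cxy yb; rewrite exprMn_comm // yb mulr0. Qed.

Lemma nilp_mull (x y : R) b : GRing.comm x y -> x ^+ b = 0 -> (x * y) ^+ b = 0.
Proof. by move=> cxy yb; rewrite exprMn_comm // yb mul0r. Qed.
End RingLemmas.

Section MxLemmas.
Variables (F : fieldType) (n : nat).
Local Notation Mx := ('M[F]_n.+1).

Lemma iter_mulmx (X : Mx) k : iter k (mulmx X) 1%:M = X ^+ k.
Proof. by elim: k => [|k IH] //=; rewrite IH exprS. Qed.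

Lemma unipotentE (U : Mx) : unipotent_mx U <-> exists k, (U - 1) ^+ k = 0.
Proof. by split=> -[k hk]; exists k; rewrite -?iter_mulmx // iter_mulmx in hk *. Qed.

Lemma unit1_nilp (z : Mx) k : z ^+ k = 0 -> 1 + z \in unitmx.
Proof.
move=> zk.
have := subrXX_comm k (commr1 (- z)).
rewrite expr1n exprNn zk mulr0 sub0r.
set s := (\sum_(i < k) _) => h.
have h2 : (1 + z) *m s = 1%:M.
  by rewrite -[_ *m _]opprK -mulNr opprD addrC -h opprK.
by case: (mulmx1_unit h2).
Qed.

Lemma unit_add_nilp (x y : Mx) k : x \in unitmx -> GRing.comm x y -> y ^+ k = 0 ->
  x + y \in unitmx.
Proof.
move=> xu cxy yk.
have -> : x + y = x * (1 + x^-1 * y).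
  by rewrite mulrDr mulr1 mulrA mulrV ?mul1r.
rewrite unitmx_mul; apply/andP; split => //.
apply: (unit1_nilp (k := k)); apply: nilp_mulr => //.
by apply/commr_sym/commrV.
Qed.
End MxLemmas.



Section Diag.
Variables (F : fieldType) (n : nat).
Local Notation Mx := ('M[F]_n.+1).

Lemma conjmx_mulu (P A B : Mx) : P \in unitmx ->
  conjmx P (A *m B) = conjmx P A *m conjmx P B.
Proof.
move=> Pu; rewrite !conjumx // !mulmxA; congr (_ *m _).
by rewrite -[_ *m invmx P *m P]mulmxA mulVmx // mulmx1.
Qed.

Lemma conjmx_expu (P A : Mx) k : P \in unitmx ->
  conjmx P (A ^+ k) = (conjmx P A) ^+ k.
Proof.
move=> Pu; elim: k => [|k IH].
  by rewrite !expr0 conjumx // mulmx1 mulmxV.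
by rewrite !exprS -IH; apply: conjmx_mulu.
Qed.

Lemma conjmx_addu (P A B : Mx) : P \in unitmx ->
  conjmx P (A + B) = conjmx P A + conjmx P B.
Proof. by move=> Pu; rewrite !conjumx // mulmxDr mulmxDl. Qed.

Lemma conjmx_scaleu (P A : Mx) a : P \in unitmx ->
  conjmx P (a *: A) = a *: conjmx P A.
Proof. by move=> Pu; rewrite !conjumx // scalemxAl scalemxAr. Qed.

Lemma is_diag_add (A B : Mx) : is_diag_mx A -> is_diag_mx B -> is_diag_mx (A + B).
Proof.
move=> /is_diag_mxP hA /is_diag_mxP hB; apply/is_diag_mxP => i j hij.
by rewrite mxE hA // hB // addr0.
Qed.

Lemma is_diag_scale (A : Mx) a : is_diag_mx A -> is_diag_mx (a *: A).
Proof.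
move=> /is_diag_mxP hA; apply/is_diag_mxP => i j hij.
by rewrite mxE hA // mulr0.
Qed.

Lemma diag_exp (d : 'rV[F]_n.+1) k i : ((diag_mx d) ^+ k) i i = d 0 i ^+ k.
Proof.
elim: k => [|k IH]; first by rewrite !expr0 mxE eqxx.
by rewrite !exprS [_ * _]mul_diag_mx mxE IH.
Qed.

Lemma diag_nilp0 (Z : Mx) k : diagonalizable Z -> Z ^+ k = 0 -> Z = 0.
Proof.
case=> P Pu /diag_mxP [d hd] Zk.
have : conjmx P (Z ^+ k) = 0 by rewrite Zk conjmx0.
rewrite conjmx_expu // hd => hdk.
have d0 : d = 0.
  apply/matrixP => i j; rewrite (ord1 i) mxE.
  have := diag_exp d k j; rewrite hdk mxE => /esym /eqP.
  by rewrite expf_eq0 => /andP [_ /eqP].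
by rewrite -(conjmxK Z Pu) hd d0 linear0 conjmx0.
Qed.

Lemma diag_span (P : Mx) (Ds : seq Mx) (c : nat -> F) : P \in unitmx ->
  (forall D, D \in Ds -> is_diag_mx (conjmx P D)) ->
  diagonalizable (\sum_(i < size Ds) c i *: Ds`_i).
Proof.
move=> Pu hD; exists P => //.
rewrite /(_ ~__ _) /=.
apply: (big_ind (fun A => is_diag_mx (conjmx P A))) => [|A B hA hB|i _].
- by rewrite conjmx0 mx0_is_diag.
- by rewrite conjmx_addu // is_diag_add.
- by rewrite conjmx_scaleu // is_diag_scale // hD // mem_nth.
Qed.

Lemma codiag_span (Ds : seq Mx) (c : nat -> F) :
  {in Ds &, forall A B, comm_mx A B} -> {in Ds, forall A, diagonalizable A} ->
  diagonalizable (\sum_(i < size Ds) c i *: Ds`_i).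
Proof.
move=> hc hd; have [P Pu /allP hP] := (proj1 (codiagonalizableP Ds) (conj hc hd)).
by apply: (diag_span c Pu) => D /hP.
Qed.
End Diag.



Section Uniq.
Variables (F : fieldType) (n : nat).
Local Notation Mx := ('M[F]_n.+1).

Lemma diag_sub (S S' : Mx) : GRing.comm S S' -> diagonalizable S -> diagonalizable S' ->
  diagonalizable (S - S').
Proof.
move=> c dS dS'.
have := @codiag_span F n [:: S; S'] (fun i => if i == 0%N then 1 else -1).
rewrite big_ord_recl big_ord1 /= scale1r scaleN1r; apply.
  move=> A B; rewrite !inE => /orP[] /eqP -> /orP[] /eqP ->; rewrite /comm_mx //.
by move=> A; rewrite !inE => /orP[] /eqP ->.
Qed.

Lemma jd_unique (S U S' U' : Mx) k k' :
  GRing.comm S U -> GRing.comm S S' -> GRing.comm S U' ->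
  GRing.comm U S' -> GRing.comm U U' -> GRing.comm S' U' ->
  diagonalizable S -> diagonalizable S' ->
  (U - 1) ^+ k = 0 -> (U' - 1) ^+ k' = 0 ->
  S * U = S' * U' -> U \in unitmx -> S = S'.
Proof.
move=> cSU cSS' cSU' cUS' cUU' cS'U' dS dS' Uk U'k e Uu.
apply/eqP; rewrite -subr_eq0; apply/eqP.
apply: (diag_nilp0 (k := k' + k)); first exact: diag_sub.
have eZ : (S - S') * U = S' * (U' - U).
  by rewrite mulrBl mulrBr e.
have hnil : (S' * (U' - U)) ^+ (k' + k) = 0.
  apply: nilp_mulr; first by apply: commrB.
  have -> : U' - U = (U' - 1) + - (U - 1) by rewrite opprB addrA subrK.
  apply: nilp_add => //; last by rewrite exprNn Uk mulr0.
  apply: commrN; apply: commrB; last exact: commr1.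
  apply: commr_sym; apply: commrB => //; exact: commr1.
move: hnil; rewrite -eZ exprMn_comm; last first.
  by apply: commr_sym; apply: commrB => //; apply: commr_sym.
move=> h.
have Uku : U ^+ (k' + k) \in unitmx by rewrite unitrX.
by rewrite -[LHS]mulr1 -(mulrV Uku) mulrA h mul0r.
Qed.
End Uniq.



Section PolyCRT.
Variable C : fieldType.
Implicit Types (p : {poly C}) (L : seq C).

Lemma cop_XK_prod (l : C) L K : l \notin L ->
  coprimep (('X - l%:P) ^+ K) (\prod_(m <- L) ('X - m%:P) ^+ K).
Proof.
move=> lL; apply: coprimep_expl.
elim: L lL => [|m L IH]; first by rewrite big_nil coprimep1.
rewrite inE negb_or => /andP [lm lL].
rewrite big_cons coprimepMr IH // andbT.
by apply: coprimep_expr; rewrite coprimep_XsubC root_XsubC eq_sym.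
Qed.

Lemma prod_XK_dvd L K p : uniq L ->
  (forall l, l \in L -> ('X - l%:P) ^+ K %| p) ->
  \prod_(m <- L) ('X - m%:P) ^+ K %| p.
Proof.
elim: L => [|l L IH]; first by rewrite big_nil dvd1p.
move=> /= /andP [lL uL] h; rewrite big_cons Gauss_dvdp ?cop_XK_prod //.
by rewrite h ?mem_head // IH // => m mL; apply: h; rewrite inE mL orbT.
Qed.

Lemma dvd_prod_mem L (F : C -> {poly C}) l : l \in L -> F l %| \prod_(m <- L) F m.
Proof. by move=> lL; rewrite (big_rem l lL) /= dvdp_mulIl. Qed.

Lemma crt_exists L K : uniq L ->
  exists f : {poly C}, forall l, l \in L -> ('X - l%:P) ^+ K %| f - l%:P.
Proof.
elim: L => [|l L IH]; first by exists 0.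
move=> /= /andP [lL uL]; have [f' hf'] := IH uL.
set a := ('X - l%:P) ^+ K; set b := \prod_(m <- L) ('X - m%:P) ^+ K.
have /Bezout_eq1_coprimepP [[u1 u2] /= hu] : coprimep a b by apply: cop_XK_prod.
exists (l%:P * (u2 * b) + f' * (u1 * a)) => m; rewrite inE => /orP [/eqP ->|mL].
  have -> : l%:P * (u2 * b) + f' * (u1 * a) - l%:P =
    (f' - l%:P) * u1 * a + l%:P * (u1 * a + u2 * b - 1) by ring.
  by rewrite hu subrr mulr0 addr0 dvdp_mull // dvdpp.
have -> : l%:P * (u2 * b) + f' * (u1 * a) - m%:P =
   (l%:P - m%:P) * u2 * b + (f' - m%:P) * (u1 * a) + m%:P * (u1 * a + u2 * b - 1) by ring.
rewrite hu subrr mulr0 addr0; apply: dvdp_add.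
  by apply: dvdp_mull; apply: (dvd_prod_mem (fun m => ('X - m%:P) ^+ K)).
by rewrite mulrA; do 2 apply: dvdp_mulr; apply: hf'.
Qed.

Lemma prod_undup_dvd (s : seq C) :
  \prod_(z <- s) ('X - z%:P) %| \prod_(l <- undup s) ('X - l%:P) ^+ (size s).
Proof.
elim: s => [|z s IH] /=; first by rewrite !big_nil dvdpp.
case: ifP => zs.
  rewrite big_cons.
  under [X in _ %| X]eq_bigr do rewrite exprS.
  rewrite big_split /=; apply: dvdp_mul => //.
  by apply: (dvd_prod_mem (fun m => ('X - m%:P))); rewrite mem_undup.
rewrite !big_cons exprS -mulrA; apply: dvdp_mul; first exact: dvdpp.
apply: dvdp_mull; apply: (dvdp_trans IH).
elim: (undup s) => [|x r IHr]; first by rewrite !big_nil dvdpp.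
by rewrite !big_cons exprS; apply: dvdp_mul => //; apply: dvdp_mull; apply: dvdpp.
Qed.
End PolyCRT.



Section Jordan.
Variables (C : closedFieldType) (n : nat).
Local Notation Mx := ('M[C]_n.+1).

Lemma horner_mx_dvd0 (A : Mx) (p q : {poly C}) :
  horner_mx A p = 0 -> p %| q -> horner_mx A q = 0.
Proof. by move=> hp /divpK <-; rewrite rmorphM /= hp mulr0. Qed.

Lemma add_jordan (A : Mx) : exists f : {poly C}, exists K,
  diagonalizable (horner_mx A f) /\ (A - horner_mx A f) ^+ K = 0.
Proof.
have [s hs] := closed_field_poly_normal (char_poly A).
move: hs; rewrite (monicP (char_poly_monic A)) scale1r => hs.
set L := undup s; set K := size s.
have Kpos : (0 < K)%N.
  by rewrite /K; have := size_char_poly A; rewrite hs size_prod_XsubC => -[->].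
have [f hf] := crt_exists K (undup_uniq s).
set Q := \prod_(l <- L) ('X - l%:P) ^+ K.
have hQ : horner_mx A Q = 0.
  apply: (horner_mx_dvd0 (Cayley_Hamilton A)); rewrite hs.
  exact: prod_undup_dvd.
exists f, K; split.
  apply/diagonalizableP; exists L; first exact: undup_uniq.
  apply: mxminpoly_min.
  have -> : horner_mx (horner_mx A f) (\prod_(x <- L) ('X - x%:P)) =
            horner_mx A (\prod_(x <- L) (f - x%:P)).
    rewrite !rmorph_prod; apply: eq_bigr => x _.
    by rewrite !rmorphB /= !horner_mx_X !horner_mx_C.
  apply: (horner_mx_dvd0 hQ); apply: prod_XK_dvd; first exact: undup_uniq.
  move=> l lL; apply: (dvdp_trans (hf l lL)).
  exact: (dvd_prod_mem (fun x => f - x%:P)).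
have -> : (A - horner_mx A f) ^+ K = horner_mx A (('X - f) ^+ K).
  by rewrite rmorphXn rmorphB /= horner_mx_X.
apply: (horner_mx_dvd0 hQ); apply: prod_XK_dvd; first exact: undup_uniq.
move=> l lL; apply: dvdp_exp2r.
have -> : 'X - f = ('X - l%:P) - (f - l%:P) by ring.
apply: dvdp_sub; first exact: dvdpp.
apply: dvdp_trans (hf l lL); apply: dvdp_exp => //; exact: dvdpp.
Qed.
End Jordan.



Section PolyMx.
Variable C : numClosedFieldType.

Lemma poly_valid0 (p q : {poly C}) : q != 0 ->
  (forall u, q.[u] != 0 -> p.[u] = 0) -> p = 0.
Proof.
move=> q0 h; apply/eqP; apply: contraT => p0.
have pq0 : p * q != 0 by rewrite mulf_neq0.
set rs := [seq (i%:R : C) | i <- iota 0 (size (p * q))].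
have := max_poly_roots pq0 (rs := rs).
rewrite size_map size_iota ltnn; apply => //.
  apply/allP => x _; rewrite /root hornerM.
  by case: (eqVneq q.[x] 0) => [->|/h ->]; rewrite ?mulr0 ?mul0r.
by rewrite map_inj_uniq ?iota_uniq // => a b /eqP; rewrite eqr_nat => /eqP.
Qed.

Lemma pmx_valid_eq m k (A B : 'M[{poly C}]_(m, k)) q : q != 0 ->
  (forall u, q.[u] != 0 -> eval_pmx A u = eval_pmx B u) -> A = B.
Proof.
move=> q0 h; apply/matrixP => i j; apply/eqP; rewrite -subr_eq0; apply/eqP.
apply: (poly_valid0 q0) => u hu; rewrite hornerD hornerN.
have := congr1 (fun X : 'M[C]_(m, k) => X i j) (h u hu); rewrite !mxE => ->.
by rewrite subrr.
Qed.

Lemma eval_pmxM m k l (A : 'M[{poly C}]_(m, k)) (B : 'M_(k, l)) u :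
  eval_pmx (A *m B) u = eval_pmx A u *m eval_pmx B u.
Proof. exact: (map_mxM (horner_eval u)). Qed.

Lemma eval_pmxC m k (B : 'M[C]_(m, k)) u : eval_pmx (map_mx polyC B) u = B.
Proof. by apply/matrixP => i j; rewrite !mxE hornerC. Qed.

Definition coefm k {m l} (A : 'M[{poly C}]_(m, l)) := map_mx (fun p : {poly C} => p`_k) A.

Lemma coefm_mulC k m l r (A : 'M[{poly C}]_(m, l)) (B : 'M[C]_(l, r)) :
  coefm k (A *m map_mx polyC B) = coefm k A *m B.
Proof.
apply/matrixP => i j; rewrite !mxE coef_sum; apply: eq_bigr => x _.
by rewrite !mxE coefMC.
Qed.

Lemma coefm_Cmul k m l r (A : 'M[{poly C}]_(l, r)) (B : 'M[C]_(m, l)) :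
  coefm k (map_mx polyC B *m A) = B *m coefm k A.
Proof.
apply/matrixP => i j; rewrite !mxE coef_sum; apply: eq_bigr => x _.
by rewrite !mxE coefCM.
Qed.

Lemma eval_coefm m l (A : 'M[{poly C}]_(m, l)) : exists d,
  forall u, eval_pmx A u = \sum_(k < d) u ^+ k *: coefm k A.
Proof.
exists (\max_(ij : 'I_m * 'I_l) size (A ij.1 ij.2)) => u.
apply/matrixP => i j; rewrite summxE !mxE.
rewrite (@horner_coef_wide _ _ _ u (@leq_bigmax _ (fun ij : 'I_m * 'I_l => size (A ij.1 ij.2)) (i, j))).
by apply: eq_bigr => k _; rewrite !mxE mulrC.
Qed.
End PolyMx.

Lemma seq_choice (T : Type) (x0 : T) (Pr : nat -> T -> Prop) d :
  (forall k, exists x, Pr k x) ->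
  exists s : seq T, size s = d /\ forall k, (k < d)%N -> Pr k (nth x0 s k).
Proof.
move=> h; elim: d => [|d [s [sd hs]]]; first by exists [::].
have [x hx] := h d.
exists (rcons s x); split; first by rewrite size_rcons sd.
move=> k; rewrite ltnS leq_eqVlt => /orP [/eqP ->|kd].
  by rewrite nth_rcons sd ltnn eqxx.
by rewrite nth_rcons sd kd; apply: hs.
Qed.



Lemma nilp_sum (R : pzRingType) (I : Type) (r : seq I) (F : I -> R) :
  (forall i j, GRing.comm (F i) (F j)) -> (forall i, exists K, F i ^+ K = 0) ->
  exists K, (\sum_(i <- r) F i) ^+ K = 0.
Proof.
move=> hc hn; elim: r => [|i r [K hK]]; first by exists 1%N; rewrite big_nil expr1.
have [Ki hKi] := hn i; exists (Ki + K)%N; rewrite big_cons.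
apply: nilp_add => //; apply: commr_sum => j _; exact: hc.
Qed.

Section MxComm.
Variables (F : fieldType) (n : nat).
Local Notation Mx := ('M[F]_n.+1).

Lemma commZ (X Y : Mx) a : GRing.comm X Y -> GRing.comm X (a *: Y).
Proof. by move=> c; rewrite /GRing.comm -scalerAr -scalerAl c. Qed.

Lemma diag_scale (A : Mx) a : diagonalizable A -> diagonalizable (a *: A).
Proof. case=> P Pu hP; exists P => //; move: hP; rewrite /similar_to /= => hP. rewrite conjmx_scaleu // is_diag_scale //. Qed.
End MxComm.



Theorem lemma4p12 (R : realType) (n : nat) (q : {poly R[i]})
    (M : R[i] -> 'M[R[i]]_n)
    (HM : rational_mx_fun q M)
    (Hinv : forall u, q.[u] != 0 -> M u \in unitmx)
    (Hcomm : forall u v, q.[u] != 0 -> q.[v] != 0 ->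
               M u *m M v = M v *m M u)
    (MS MU : R[i] -> 'M[R[i]]_n)
    (Hjd : forall u, q.[u] != 0 -> mult_jordan_decomp (M u) (MS u) (MU u)) :
  (exists qS : {poly R[i]}, rational_mx_fun qS MS /\
      forall u, q.[u] != 0 -> qS.[u] != 0) /\
  (exists qU : {poly R[i]}, rational_mx_fun qU MU /\
      forall u, q.[u] != 0 -> qU.[u] != 0).
Proof.
case: n => [|n] in M HM Hinv Hcomm MS MU Hjd *.
  case: HM => q0 _.
  by split; exists q; (split; last done); split => //; exists 0 => u _;
    apply/matrixP => [[]].
case: HM => q0 [P hP].
have hPu u : q.[u] != 0 -> eval_pmx P u = q.[u] *: M u.
  by move=> hu; rewrite hP // scalerA mulfV // scale1r.
have [d hd] := eval_coefm P.
pose Pk k := coefm k P.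
have hPkM k v : q.[v] != 0 -> GRing.comm (Pk k) (M v).
  move=> hv.
  have e : P *m map_mx polyC (M v) = map_mx polyC (M v) *m P.
    apply: (pmx_valid_eq q0) => u hu.
    by rewrite !eval_pmxM eval_pmxC hPu // -scalemxAl -scalemxAr Hcomm.
  by have := congr1 (coefm k) e; rewrite coefm_mulC coefm_Cmul.
have hPkk k l : GRing.comm (Pk k) (Pk l).
  have e : map_mx polyC (Pk k) *m P = P *m map_mx polyC (Pk k).
    apply: (pmx_valid_eq q0) => u hu.
    rewrite !eval_pmxM eval_pmxC hPu // -scalemxAl -scalemxAr.
    by congr (_ *: _); apply: (hPkM k u hu).
  by have := congr1 (coefm l) e; rewrite coefm_mulC coefm_Cmul.
have hj k : exists f, diagonalizable (horner_mx (Pk k) f) /\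
    exists K, (Pk k - horner_mx (Pk k) f) ^+ K = 0.
  by have [f [K [h1 h2]]] := add_jordan (Pk k); exists f; split => //; exists K.
have [fs [_ hfs]] := seq_choice 0 d hj.
pose Dk k := horner_mx (Pk k) (nth 0 fs k).
pose Nk k := Pk k - Dk k.
pose CC Y := forall k, GRing.comm (Pk k) Y.
have cD k Y : CC Y -> GRing.comm (Dk k) Y.
  by move=> hY; apply: comm_horner_mx; apply: hY.
have cN k Y : CC Y -> GRing.comm (Nk k) Y.
  by move=> hY; apply: commr_sym; apply: commrB; apply: commr_sym;
    [apply: hY | apply: cD].
have CD k : CC (Dk k) by move=> j; apply: comm_mx_horner; apply: hPkk.
have CN k : CC (Nk k) by move=> j; apply: commrB; [apply: hPkk | apply: CD].
have CP k : CC (Pk k) by move=> j; apply: hPkk.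
have CCsum (I : Type) (r : seq I) (G : I -> 'M_n.+1) (c : I -> R[i]) :
    (forall i, CC (G i)) -> CC (\sum_(i <- r) c i *: G i).
  by move=> hG k; apply: commr_sum => i _; apply: commZ; apply: hG.
have CCsum' (I : Type) (r : seq I) (G : I -> 'M_n.+1) (c : I -> R[i]) Y :
    (forall i, GRing.comm (G i) Y) -> GRing.comm (\sum_(i <- r) c i *: G i) Y.
  move=> hG; apply: commr_sym; apply: commr_sum => i _; apply: commr_sym.
  by apply: commr_sym; apply: commZ; apply: commr_sym; apply: hG.
pose Du u := \sum_(k < d) u ^+ k *: Dk k.
pose Nu u := \sum_(k < d) u ^+ k *: Nk k.
have ePu u : eval_pmx P u = Du u + Nu u.
  rewrite hd -big_split /=; apply: eq_bigr => k _.
  by rewrite -scalerDr /Nk addrC subrK.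
have CDu u : CC (Du u) by apply: CCsum.
have CNu u : CC (Nu u) by apply: CCsum.
have cDu u Y : CC Y -> GRing.comm (Du u) Y by move=> hY; apply: CCsum' => k; apply: cD.
have cNu u Y : CC Y -> GRing.comm (Nu u) Y by move=> hY; apply: CCsum' => k; apply: cN.
have dDu u : diagonalizable (Du u).
  have := @codiag_span _ _ [seq Dk k | k <- iota 0 d] (fun k => u ^+ k).
  rewrite size_map size_iota.
  have -> : \sum_(i < d) u ^+ i *: [seq Dk k | k <- iota 0 d]`_i = Du u.
    by apply: eq_bigr => i _; rewrite (nth_map 0%N) ?size_iota // nth_iota.
  apply.
    by move=> A B /mapP [a _ ->] /mapP [b _ ->]; apply: cD.
  move=> A /mapP [a]; rewrite mem_iota add0n => /andP [_ ha] ->.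
  by case: (hfs a ha).
have nNu u : exists K, Nu u ^+ K = 0.
  apply: nilp_sum.
    by move=> i j; apply: commZ; apply: commr_sym; apply: commZ; apply: cN.
  move=> [i hi] /=; case: (hfs i hi) => _ [K hK]; exists K.
  by rewrite exprZn /Nk /Dk hK scaler0.
have key u : q.[u] != 0 ->
    [/\ Du u \in unitmx, MS u = q.[u]^-1 *: Du u & MU u = 1 + (Du u)^-1 * Nu u].
  move=> hu.
  have [K hK] := nNu u.
  have Puu : eval_pmx P u \in unitmx by rewrite hPu // unitmxZ ?unitfE // Hinv.
  have Duu : Du u \in unitmx.
    have -> : Du u = eval_pmx P u + - Nu u by rewrite ePu addrK.
    apply: (unit_add_nilp (k := K)) => //; last by rewrite exprNn hK mulr0.
    apply: commrN; apply: commr_sym; apply: cNu; rewrite ePu => k.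
    by apply: commrD; [apply: CDu | apply: CNu].
  have eM : M u = (q.[u]^-1 *: Du u) * (1 + (Du u)^-1 * Nu u).
    rewrite -scalerAl mulrDr mulr1 mulrA mulrV // mul1r -ePu hPu //.
    by rewrite scalerA mulVf // scale1r.
  case: (Hjd u hu) => eA cSU dS uU.
  have [kU hkU] := proj1 (unipotentE _) uU.
  have Au := Hinv u hu.
  have Uu : MU u \in unitmx by move: Au; rewrite eA unitmx_mul => /andP [].
  have Su : MS u \in unitmx by move: Au; rewrite eA unitmx_mul => /andP [].
  have cSA : GRing.comm (MS u) (M u).
    by rewrite eA; apply: commrM => //; apply: commr_refl.
  have cUA : GRing.comm (MU u) (M u).
    by rewrite eA; apply: commrM; [apply: commr_sym | apply: commr_refl].
  (* first identify MS u with a polynomial in M u *)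
  have [f0 [K0 [dD0 nD0]]] := add_jordan (M u).
  set D0 := horner_mx (M u) f0 in dD0 nD0.
  have cAD0 : GRing.comm (M u) D0 by apply: comm_mx_horner.
  have cAN0 : GRing.comm D0 (M u - D0) by apply: commrB => //; apply: commr_sym.
  have D0u : D0 \in unitmx.
    have -> : D0 = M u + - (M u - D0) by rewrite opprB addrC subrK.
    apply: (unit_add_nilp (k := K0)) => //; last by rewrite exprNn nD0 mulr0.
    by apply: commrN; apply: commrB => //; apply: commr_sym.
  have SD0 : MS u = D0.
    have c2 : GRing.comm (MS u) D0 by apply: comm_mx_horner.
    have c4 : GRing.comm (MU u) D0 by apply: comm_mx_horner.
    have c3 : GRing.comm (MS u) (1 + D0^-1 * (M u - D0)).
      apply: commrD; first exact: commr1.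
      apply: commrM; first by apply: commrV.
      by apply: commrB.
    have c5 : GRing.comm (MU u) (1 + D0^-1 * (M u - D0)).
      apply: commrD; first exact: commr1.
      apply: commrM; first by apply: commrV.
      by apply: commrB.
    have c6 : GRing.comm D0 (1 + D0^-1 * (M u - D0)).
      apply: commrD; first exact: commr1.
      by apply: commrM; [apply: commrV; apply: commr_refl | ].
    have n2 : (1 + D0^-1 * (M u - D0) - 1) ^+ K0 = 0.
      rewrite (addrC 1) addrK; apply: nilp_mulr => //.
      by apply: commr_sym; apply: commrV; apply: commr_sym.
    have e2 : MS u * MU u = D0 * (1 + D0^-1 * (M u - D0)).
      transitivity (M u); first by rewrite eA.
      by rewrite mulrDr mulr1 mulrA mulrV // mul1r addrC subrK.
    exact: (@jd_unique R[i] n (MS u) (MU u) D0 (1 + D0^-1 * (M u - D0)) kU K0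
      cSU c2 c3 c4 c5 c6 dS dD0 hkU n2 e2 Uu).
  have CS : CC (MS u) by move=> k; rewrite SD0; apply: comm_mx_horner; apply: hPkM.
  have eU : MU u = (MS u)^-1 * M u by rewrite eA [_ * (_ *m _)]mulrA mulVr // mul1r.
  have CU : CC (MU u).
    by move=> k; rewrite eU; apply: commrM; [apply: commrV; apply: CS | apply: hPkM].
  have SS' : MS u = q.[u]^-1 *: Du u.
    have c2 : GRing.comm (MS u) (q.[u]^-1 *: Du u).
      by apply: commZ; apply: commr_sym; apply: cDu.
    have c4 : GRing.comm (MU u) (q.[u]^-1 *: Du u).
      by apply: commZ; apply: commr_sym; apply: cDu.
    have c3 : GRing.comm (MS u) (1 + (Du u)^-1 * Nu u).
      apply: commrD; first exact: commr1.
      apply: commrM; first by apply: commrV; apply: commr_sym; apply: cDu.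
      by apply: commr_sym; apply: cNu.
    have c5 : GRing.comm (MU u) (1 + (Du u)^-1 * Nu u).
      apply: commrD; first exact: commr1.
      apply: commrM; first by apply: commrV; apply: commr_sym; apply: cDu.
      by apply: commr_sym; apply: cNu.
    have c6 : GRing.comm (q.[u]^-1 *: Du u) (1 + (Du u)^-1 * Nu u).
      apply: commr_sym; apply: commZ; apply: commr_sym.
      apply: commrD; first exact: commr1.
      apply: commrM; first by apply: commrV; apply: commr_refl.
      by apply: cDu.
    have d2 : diagonalizable (q.[u]^-1 *: Du u) := @diag_scale R[i] n (Du u) (q.[u]^-1) (dDu u).
    have n2 : (1 + (Du u)^-1 * Nu u - 1) ^+ K = 0.
      rewrite (addrC 1) addrK; apply: nilp_mulr => //.
      by apply: commr_sym; apply: commrV; apply: commr_sym; apply: cDu.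
    have e2 : MS u * MU u = (q.[u]^-1 *: Du u) * (1 + (Du u)^-1 * Nu u).
      by transitivity (M u); [rewrite eA | exact: eM].
    exact: (@jd_unique R[i] n (MS u) (MU u) _ (1 + (Du u)^-1 * Nu u) kU K
      cSU c2 c3 c4 c5 c6 dS d2 hkU n2 e2 Uu).
  split => //.
  by rewrite eU eM -SS' mulKr.
pose Dp : 'M[{poly R[i]}]_n.+1 := \matrix_(i, j) \sum_(k < d) Dk k i j *: 'X^k.
pose Np : 'M[{poly R[i]}]_n.+1 := \matrix_(i, j) \sum_(k < d) Nk k i j *: 'X^k.
have eDp u : eval_pmx Dp u = Du u.
  apply/matrixP => i j; rewrite !mxE horner_sum summxE; apply: eq_bigr => k _.
  by rewrite hornerZ hornerXn !mxE mulrC.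
have eNp u : eval_pmx Np u = Nu u.
  apply/matrixP => i j; rewrite !mxE horner_sum summxE; apply: eq_bigr => k _.
  by rewrite hornerZ hornerXn !mxE mulrC.
have ev u m l (X : 'M_(m, l)) : eval_pmx X u = map_mx (horner_eval u) X by [].
have edet u : (\det Dp).[u] = \det (Du u) by rewrite -eDp ev det_map_mx.
have dne u : q.[u] != 0 -> \det (Du u) != 0.
  by move=> hu; case: (key u hu); rewrite unitmxE unitfE.
split.
  exists q; split => //; split => //; exists Dp => u hu.
  by case: (key u hu) => _ -> _; rewrite eDp.
have /closed_nonrootP [u0 hu0] := q0.
have det0 : \det Dp != 0.
  by apply/eqP => h; have := dne u0 hu0; rewrite -edet h horner0 eqxx.
exists (q * \det Dp); split; last first.
  by move=> u hu; rewrite hornerM mulf_neq0 // edet dne.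
split; first by rewrite mulf_neq0.
exists (q *: ((\det Dp)%:M + \adj Dp *m Np)) => u.
move=> hu0'; have hu : q.[u] != 0.
  by move: hu0'; rewrite (hornerM q) mulf_eq0 negb_or => /andP [].
have [Duu _ ->] := key u hu.
rewrite ev map_mxZ map_mxD map_scalar_mx map_mxM map_mx_adj -!ev eDp eNp.
rewrite /= !horner_evalE hornerM edet scalerA invfM mulrAC mulVf // mul1r.
rewrite scalerDr scale_scalar_mx mulVf ?dne // scalemxAl.
congr (_ + _); congr (_ * _).
by rewrite [LHS]/GRing.inv /= /invmx Duu.
Qed.
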